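(* The exponential generating function $g(x,y)=g(x,y;p,q,r)=\sum_{n\ge1}b_n(y;p,q,r)\frac{x^n}{n!}$ satisfies $$\frac{\partial}{\partial x}g(x,y)=y+\left(p+\frac{yr-q}{1-y}\right)g(x,y)+\frac{y}{1-y}\bigl(q\,g(x,1)-yr\,g(xy,1)\bigr).$$
   Context: An inversion sequence of length $n$ is a sequence $\rho=\rho_1\cdots\rho_n$ of integers with $1\le \rho_i\le i$ for all $i$; $I_{n,i}$ is the set of those of length $n$ with last letter $i$. A level, descent, or ascent of $\rho$ is an index $i\in[n-1]$ with $\rho_i=\rho_{i+1}$, $\rho_i>\rho_{i+1}$, or $\rho_i<\rho_{i+1}$, respectively. Let $b_{n,i}(p,q,r)=\sum_{\rho\in I_{n,i}}p^{\mathrm{lev}(\rho)}q^{\mathrm{des}(\rho)}r^{\mathrm{asc}(\rho)}$ (numbers of levels, descents, ascents) and $b_n(y;p,q,r)=\sum_{i=1}^n b_{n,i}(p,q,r)y^i$. *)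

(* Defs.v *)
From HB Require Import structures.
From mathcomp Require Import all_boot all_order all_algebra.
Set Implicit Arguments. Unset Strict Implicit. Unset Printing Implicit Defensive.
Import Order.TTheory GRing.Theory Num.Theory.

(* Inversion sequences are represented as [seq nat], with the paper's
   1-based letters: rho = [:: rho_1; ...; rho_n], and position i (1-based)
   is entry [nth 0 s (i-1)]. *)
Definition is_invseq (s : seq nat) : bool :=
  all (fun i => 0 < nth 0 s i <= i.+1) (iota 0 (size s)).

(* levels / descents / ascents: indices i in [n-1] (here 0-based: 0..n-2) *)
Definition lev (s : seq nat) : nat :=
  count (fun i => nth 0 s i == nth 0 s i.+1) (iota 0 (size s).-1).
Definition des (s : seq nat) : nat :=
  count (fun i => nth 0 s i.+1 < nth 0 s i) (iota 0 (size s).-1).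
Definition asc (s : seq nat) : nat :=
  count (fun i => nth 0 s i < nth 0 s i.+1) (iota 0 (size s).-1).

(* the word of a finite function 'I_n -> 'I_n.+1 (every inversion sequence of
   length n arises exactly once this way) *)
Definition word (n : nat) (t : {ffun 'I_n -> 'I_n.+1}) : seq nat :=
  [seq val (t j) | j <- enum 'I_n].

Local Open Scope ring_scope.

Definition bni (R : comRingType) (n i : nat) (p q r : R) : R :=
  \sum_(t : {ffun 'I_n -> 'I_n.+1} |
          is_invseq (word t) && (last 0%N (word t) == i))
     p ^+ lev (word t) * q ^+ des (word t) * r ^+ asc (word t).

Definition bn (R : comRingType) (n : nat) (y p q r : R) : R :=
  \sum_(1 <= i < n.+1) bni n i p q r * y ^+ i.

(* Formal power series in x over R, given by their (ordinary) coefficients. *)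
Definition fps (R : Type) := nat -> R.

Definition fderiv (R : nzRingType) (f : fps R) : fps R :=
  fun n => f n.+1 * n.+1%:R.
(* substitution x |-> c x *)
Definition fdil (R : nzRingType) (c : R) (f : fps R) : fps R :=
  fun n => c ^+ n * f n.
Definition fconst (R : nzRingType) (c : R) : fps R :=
  fun n => if n is 0%N then c else 0.

Definition egf (R : fieldType) (y p q r : R) : fps R :=
  fun n => if n is 0%N then 0 else bn n y p q r / (n`!)%:R.

(* Main.v *)
Require Import Defs.
From HB Require Import structures.
From mathcomp Require Import all_boot all_order all_algebra ring.
Import Order.TTheory GRing.Theory Num.Theory.

Fixpoint L (n : nat) : seq (seq nat) :=
  if n is m.+1 then [seq rcons s k | s <- L m, k <- iota 1 m.+1] else [:: [::]].

Lemma iota_rcons0 n : iota 0 n.+1 = rcons (iota 0 n) n.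
Proof. by rewrite -addn1 iotaD /= cats1. Qed.

Lemma invseq_rcons s k :
  is_invseq (rcons s k) = is_invseq s && (0 < k <= (size s).+1).
Proof.
rewrite /is_invseq size_rcons iota_rcons0 all_rcons nth_rcons ltnn eqxx andbC.
congr andb; apply: eq_in_all => i; rewrite mem_iota add0n => /= Hi.
by rewrite nth_rcons Hi.
Qed.

Lemma memL n s : (s \in L n) = (size s == n) && is_invseq s.
Proof.
elim: n s => [|n IH] s.
  by case: s.
case/lastP: s => [|s k].
  apply/negbTE/negP => /allpairsP [[x y] /= [_ _]]; by case: x.
rewrite size_rcons eqSS invseq_rcons.
apply/allpairsP/idP.
  case=> -[x y] /= [Hx Hy /rcons_inj [-> ->]].
  move: Hx; rewrite IH => /andP[/eqP -> ->]; rewrite eqxx /=.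
  have : y \in iota 1 n.+1 := Hy; by rewrite mem_iota add1n ltnS.
case/andP=> /eqP Hs /andP[Hi Hk]; exists (s, k) => /=; split=> //.
  by change (s \in L n); rewrite IH Hs eqxx.
by change (k \in iota 1 n.+1); rewrite mem_iota add1n ltnS -Hs.
Qed.

Lemma uniqL n : uniq (L n).
Proof.
elim: n => [|n IH] //.
change (uniq [seq rcons s k | s <- L n, k <- iota 1 n.+1]).
apply: allpairs_uniq => //; first exact: iota_uniq.
by move=> [a b] [c d] _ _ /= /rcons_inj.
Qed.

Lemma size_word n (t : {ffun 'I_n -> 'I_n.+1}) : size (word t) = n.
Proof. by rewrite size_map size_enum_ord. Qed.

Lemma nth_word {n} {t : {ffun 'I_n -> 'I_n.+1}} (j : 'I_n) : nth 0%N (word t) j = t j.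
Proof. by rewrite (nth_map j) ?size_enum_ord // nth_ord_enum. Qed.

Lemma word_inj n : injective (@word n).
Proof.
move=> t1 t2 E; apply/ffunP => j; apply: ord_inj.
by rewrite -!(nth_word j) E.
Qed.

Lemma perm_words n :
  perm_eq [seq s <- [seq word t | t <- index_enum {ffun 'I_n -> 'I_n.+1}] | is_invseq s] (L n).
Proof.
apply: uniq_perm; first by rewrite filter_uniq // map_inj_uniq ?index_enum_uniq //; exact: word_inj.
  exact: uniqL.
move=> s; rewrite mem_filter memL andbC.
case Hi: (is_invseq s); rewrite ?andbF //.
rewrite !andbT. apply/idP/idP.
  by move=> /mapP [t _ ->]; rewrite size_word.
move=> /eqP Hs; apply/(@mapP _ _ (@word n)).
exists [ffun j : 'I_n => inord (nth 0%N s j) : 'I_n.+1]; first by rewrite mem_index_enum.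
apply: (@eq_from_nth _ 0%N); first by rewrite size_word.
move=> j; rewrite Hs => jn.
rewrite (nth_word (Ordinal jn)) ffunE /= inordK //.
move: Hi => /allP /(_ j); rewrite mem_iota Hs jn => /(_ isT) /andP[_ H].
by apply: leq_ltn_trans H _.
Qed.

Lemma count_rcons_pairs (f : nat -> nat -> bool) s k : s != [::] ->
  count (fun i => f (nth 0%N (rcons s k) i) (nth 0%N (rcons s k) i.+1))
        (iota 0 (size (rcons s k)).-1) =
  (count (fun i => f (nth 0%N s i) (nth 0%N s i.+1)) (iota 0 (size s).-1)
   + f (last 0%N s) k)%N.
Proof.
move=> sn; case Hs: (size s) => [|m]; first by case: s sn Hs.
rewrite size_rcons Hs !succnK iota_rcons0 -[rcons (iota 0 m) m]cats1 count_cat /=.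
rewrite !nth_rcons Hs ltnSn eqxx ltnn addn0.
have -> : nth 0%N s m = last 0%N s by rewrite -nth_last Hs.
congr addn; apply: eq_in_count => i; rewrite mem_iota add0n => /= Hi.
by rewrite !nth_rcons Hs !ltnS Hi (ltnW Hi).
Qed.

Local Open Scope ring_scope.

Definition w (R : comNzRingType) (p q r : R) (s : seq nat) : R :=
  p ^+ lev s * q ^+ des s * r ^+ asc s.

Definition step (R : comNzRingType) (p q r : R) (i k : nat) : R :=
  p ^+ (i == k) * q ^+ (k < i)%N * r ^+ (i < k)%N.

Arguments w {R}. Arguments step {R}.

Lemma w_rcons (R : comNzRingType) (p q r : R) (s : seq nat) (k : nat) : s != [::] ->
  w p q r (rcons s k) = w p q r s * step p q r (last 0%N s) k.
Proof.
move=> sn; rewrite /w /step /lev /des /asc (count_rcons_pairs (fun a b => a == b)) //.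
rewrite (count_rcons_pairs (fun a b => b < a)%N) //.
rewrite (count_rcons_pairs (fun a b => a < b)%N) // !exprD.
ring.
Qed.

Lemma bni_L (R : comNzRingType) n i (p q r : R) :
  bni n i p q r = \sum_(s <- L n | last 0%N s == i) w p q r s.
Proof.
rewrite /bni -(big_map (@word n) (fun s => is_invseq s && (last 0%N s == i)) (w p q r)).
by rewrite -big_filter_cond (perm_big _ (perm_words n)).
Qed.

Lemma last_L {n s} : (0 < n)%N -> s \in L n -> (0 < last 0%N s <= n)%N.
Proof.
move=> n0; rewrite memL => /andP[/eqP Hs Hi].
rewrite -nth_last; move: Hi => /allP /(_ (size s).-1).
rewrite mem_iota add0n Hs prednK // => H.
by apply: H; rewrite leqnn.
Qed.

Lemma bn_L (R : comNzRingType) n (y p q r : R) : (0 < n)%N ->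
  bn n y p q r = \sum_(s <- L n) w p q r s * y ^+ last 0%N s.
Proof.
move=> n0; rewrite /bn.
under eq_bigr => i _ do rewrite bni_L big_distrl big_mkcond.
rewrite exchange_big /=; apply: eq_big_seq => s sL.
have /andP[l0 ln] := last_L n0 sL.
rewrite -big_mkcond /= -big_filter.
have -> : [seq i <- index_iota 1 n.+1 | last 0%N s == i] = [:: last 0%N s].
  rewrite -(filter_pred1_uniq (iota_uniq 1 n) (_ : last 0%N s \in iota 1 n)).
    rewrite /index_iota subn1 /=; apply: eq_filter => i /=; by rewrite eq_sym.
  by rewrite mem_iota add1n ltnS l0.
by rewrite big_seq1.
Qed.

Lemma step_sum (R : comNzRingType) (p q r y : R) i m : (0 < i)%N ->
  (1 - y) * \sum_(1 <= k < m.+1) step p q r i k * y ^+ k =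
  if (m < i)%N then q * (y - y ^+ m.+1)
  else (p * (1 - y) + y * r - q) * y ^+ i + y * q - r * y ^+ m.+1.
Proof.
move=> i0; elim: m => [|m IH].
  by rewrite big_geq // i0 expr1 subrr mulr0 mulr0.
rewrite big_nat_recr //= mulrDr IH /step.
case: (ltngtP m.+1 i) => H /=.
- by rewrite !expr0 !expr1 !exprS; ring.
- by rewrite !expr0 !expr1 !exprS; ring.
- by subst i; rewrite !expr0 !expr1 !exprS; ring.
Qed.

Lemma bn_rec (R : comNzRingType) n (y p q r : R) : (0 < n)%N ->
  (1 - y) * bn n.+1 y p q r =
  (p * (1 - y) + y * r - q) * bn n y p q r + y * q * bn n 1 p q r
  - r * y ^+ n.+2 * bn n 1 p q r.
Proof.
move=> n0; rewrite !bn_L //.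
change (L n.+1) with [seq rcons s k | s <- L n, k <- iota 1 n.+1].
rewrite big_allpairs_dep !mulr_sumr -big_split -sumrB.
apply: eq_big_seq => s sL.
have /andP[l0 ln] := last_L n0 sL.
have sn : s != [::].
  by move: sL; rewrite memL => /andP[/eqP Hs _]; apply/eqP => E; move: Hs n0; rewrite E => <-.
under eq_bigr => k _ do rewrite last_rcons w_rcons // -mulrA.
rewrite -mulr_sumr expr1n mulr1.
have := @step_sum R p q r y _ n.+1 l0.
rewrite /index_iota subn1 /= ltnNge (leq_trans ln (leqnSn n)) /= => E.
rewrite mulrCA E; ring.
Qed.

From Stdlib Require Import FunctionalExtensionality.

Theorem theorem3p3 (R : numFieldType) (p q r y : R) (hy : y != 1) :
  fderiv (egf y p q r) =
  (fun n : nat =>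
     fconst y n
     + (p + (y * r - q) / (1 - y)) * egf y p q r n
     + y / (1 - y) * (q * egf 1 p q r n
                      - y * r * fdil y (egf 1 p q r) n)).
Proof.
have y1 : 1 - y != 0 by rewrite subr_eq0 eq_sym.
apply: functional_extensionality => -[|n].
  rewrite /fderiv /egf /fdil /fconst /= bn_L //= big_seq1 /w /=.
  rewrite (_ : lev [:: 1%N] = 0%N) // (_ : des [:: 1%N] = 0%N) //.
  rewrite (_ : asc [:: 1%N] = 0%N) // (_ : 1`! = 1%N) // invr1; ring.
rewrite /fderiv /egf /fdil /fconst.
have E := @bn_rec R n.+1 y p q r (ltn0Sn n).
have -> : bn n.+2 y p q r = ((p * (1 - y) + y * r - q) * bn n.+1 y p q r + y * q * bn n.+1 1 p q r
  - r * y ^+ n.+3 * bn n.+1 1 p q r) / (1 - y).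
  by rewrite -E mulrC mulKf.
have f0 : (n.+1)`!%:R != 0 :> R by rewrite pnatr_eq0 -lt0n fact_gt0.
have n0 : (n.+2)%:R != 0 :> R by rewrite pnatr_eq0.
rewrite factS natrM !exprS.
move: f0 n0; set B := bn n.+1 y p q r; set C := bn n.+1 1 p q r.
set F := (n.+1)`!%:R; set N := n.+2%:R; set Y := y ^+ n => f0 n0.
field.
by rewrite f0 y1 /= -natrD pnatr_eq0.
Qed.
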